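(* Let $\mathbb F_q$ be any finite field. Then $R_q(2,t) \leq m_q(t)$ for all integers $t \geq 2$.
   Context: For $A \subseteq \mathbb F_q^n$, the direction set is $A^\to := \{d \in \mathbb F_q^n : \exists x \in \mathbb F_q^n \text{ with } x + \lambda d \in A \text{ for all } \lambda \in \mathbb F_q\}$, and $\omega^\to(A)$ is the largest dimension of a linear subspace of $\mathbb F_q^n$ contained in $A^\to \cup\{0\}$. $m_q(t)$ is the minimum $n$ such that every $A \subseteq \mathbb F_q^n$ with $|A| \geq q^{n-t+1}$ satisfies $\omega^\to(A) \geq t$. $R_q(s,t)$ denotes the minimum $n$ such that for every red-blue coloring of the $1$-dimensional linear subspaces of $\mathbb F_q^n$, there is either a linear subspace of dimension $s$ all of whose $1$-dimensional subspaces are red, or a linear subspace of dimension $t$ all of whose $1$-dimensional subspaces are blue. *)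

(* Defs.v *)
From HB Require Import structures.
From mathcomp Require Import all_boot all_order all_algebra all_field.
Set Implicit Arguments. Unset Strict Implicit. Unset Printing Implicit Defensive.
Import GRing.Theory.
Local Open Scope ring_scope.

(* Vectors of F_q^n are row vectors 'rV[F]_n, F a finite field, q = #|F|.
   A linear subspace of dimension k is the row space of a row-free
   k x n matrix. *)

Definition dirset (F : finFieldType) (n : nat) (A : {set 'rV[F]_n}) :
  {set 'rV[F]_n} :=
  [set d | [exists x : 'rV[F]_n, [forall l : F, x + l *: d \in A]]].

Definition has_dir_subspace (F : finFieldType) (n : nat)
  (A : {set 'rV[F]_n}) (k : nat) : bool :=
  [exists U : 'M[F]_(k, n), row_free U &&
     [forall v : 'rV[F]_n, (v <= U)%MS ==> (v \in dirset A) || (v == 0)]].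

Definition omega_dir (F : finFieldType) (n : nat) (A : {set 'rV[F]_n}) : nat :=
  \max_(k < n.+1 | has_dir_subspace A k) k.

(* Property defining m_q(t): every A subset F_q^n with |A| >= q^(n-t+1)
   has omega^->(A) >= t.  (Truncated subtraction is harmless: for
   n - t + 1 <= 0, |A| >= q^(n-t+1) is equivalent to |A| >= 1 = q^0.) *)
Definition m_prop (F : finFieldType) (t n : nat) : Prop :=
  forall A : {set 'rV[F]_n}, (#|F| ^ (n.+1 - t) <= #|A|)%N -> (t <= omega_dir A)%N.

(* A colouring of the 1-dimensional subspaces is given as a function on
   subspaces (square matrices, canonical representative <<v>>%MS), of
   which only the values at the lines <<v>>%MS, v != 0, matter.
   true = red, false = blue. *)
Definition mono_subspace (F : finFieldType) (n : nat)
  (c : 'M[F]_n -> bool) (col : bool) (k : nat) : Prop :=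
  exists U : 'M[F]_(k, n), row_free U /\
    forall v : 'rV[F]_n, v != 0 -> (v <= U)%MS -> c (<<v>>%MS) = col.

Definition ramsey_prop (F : finFieldType) (s t n : nat) : Prop :=
  forall c : 'M[F]_n -> bool, mono_subspace c true s \/ mono_subspace c false t.

(* Main.v *)
Require Import Defs.
From HB Require Import structures.
From mathcomp Require Import all_boot all_order all_algebra all_field.
From mathcomp Require Import zify.
Set Implicit Arguments. Unset Strict Implicit. Unset Printing Implicit Defensive.
Import GRing.Theory.
Local Open Scope ring_scope.

Section Aux.
Variables (F : finFieldType) (n : nat).
Local Notation q := #|F|.
Implicit Types (S : {set 'rV[F]_n}) (V W : 'M[F]_n).

Definition cone S := (0 \notin S) /\ (forall s a, s \in S -> a != 0 -> a *: s \in S).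

Lemma q_gt1 : (1 < q)%N. Proof. exact: card_finNzRing_gt1. Qed.

Lemma exists_fresh V S : (#|S|.+2 <= q ^ \rank V)%N ->
  exists v : 'rV[F]_n, [/\ (v <= V)%MS, v != 0 & v \notin S].
Proof.
move=> hc.
pose I := [set u *m row_base V | u : 'rV[F]_(\rank V)].
have cI : #|I| = (q ^ \rank V)%N.
  by rewrite card_imset ?card_mx ?mul1n //; apply: row_free_inj; apply: row_base_free.
case: (boolP [exists v, [&& v \in I, v != 0 & v \notin S]]).
  case/existsP=> v /and3P[vI v0 vS]; exists v; split=> //.
  case/imsetP: vI => u _ ->; by rewrite (submx_trans (submxMl _ _)) // eq_row_base.
rewrite negb_exists => /forallP hI.
have : I \subset 0 |: S.
  apply/subsetP=> v vI; move: (hI v); rewrite vI /= !inE.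
  by case: (v == 0); case: (v \in S).
move/subset_leq_card; rewrite cI cardsU1; case: (_ \notin _); 
  by move=> h; move: (leq_trans hc h); rewrite ?ltnn // => /ltnW; rewrite ltnn.
Qed.


Section Lift.
Variables (V : 'M[F]_n) (S : {set 'rV[F]_n}) (v : 'rV[F]_n).
Hypotheses (cS : cone S) (SV : forall s, s \in S -> (s <= V)%MS)
  (vV : (v <= V)%MS) (v0 : v != 0) (vS : v \notin S).
Definition Hs := (V :\: <<v>>)%MS.
Definition Pj := proj_mx Hs <<v>>%MS.
Definition Sp := [set s *m Pj | s in S].

Lemma dxHv : (Hs :&: <<v>>)%MS = 0.
Proof. exact: capmx_diff. Qed.

Lemma rankH : (\rank Hs).+1 = \rank V.
Proof.
have vvV : (<<v>> <= V)%MS by rewrite genmxE.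
have d : (Hs :&: (V :&: <<v>>))%MS = 0.
  apply/eqP; rewrite -submx0 -dxHv capmxS ?capmxSr //.
have := mxrank_disjoint_sum d.
rewrite (addsmx_diff_cap_eq V <<v>>%MS) => ->.
rewrite (capmx_idPr vvV) genmxE rank_rV v0 addn1 //.
Qed.

Lemma SpH s : s \in Sp -> (s <= Hs)%MS.
Proof. by case/imsetP=> x _ ->; apply: proj_mx_sub. Qed.

Lemma cone_Sp : cone Sp.
Proof.
case: cS => S0 Sc; split.
  apply/negP=> /imsetP[s sS /esym s0].
  have sV := SV sS.
  have sHv : (s <= Hs + <<v>>)%MS.
    apply: (submx_trans sV); rewrite -{1}(addsmx_diff_cap_eq V <<v>>%MS).
    by rewrite addsmxS ?capmxSr.
  have := add_proj_mx dxHv sHv; rewrite /Pj in s0; rewrite s0 add0r => es.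
  have : (s <= <<v>>)%MS by rewrite -es proj_mx_sub.
  rewrite genmxE.
  case/sub_rVP=> a sa.
  have a0 : a != 0 by apply: contraNneq S0 => a0; rewrite -{1}(_ : s = 0) // sa a0 scale0r.
  move: vS; rewrite (_ : v = a^-1 *: s) ?Sc ?invr_eq0 //.
  by rewrite sa scalerA mulVf // scale1r.
move=> s' a /imsetP[s sS ->] a0.
by apply/imsetP; exists (a *: s); rewrite ?Sc // scalemxAl.
Qed.

Lemma card_Sp : (#|Sp| <= #|S|)%N.
Proof. exact: leq_imset_card. Qed.

Lemma lift W' k : (W' <= Hs)%MS -> \rank W' = k ->
  (forall s, s \in Sp -> ~~ (s <= W')%MS) ->
  [/\ ((W' + <<v>>)%MS <= V)%MS, \rank (W' + <<v>>)%MS = k.+1 &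
      forall s, s \in S -> ~~ (s <= W' + <<v>>)%MS].
Proof.
move=> WH rW av; split.
- rewrite addsmx_sub genmxE vV andbT (submx_trans WH) //; exact: diffmxSl.
- rewrite mxrank_disjoint_sum ?genmxE ?rank_rV ?v0 ?rW ?addn1 //.
  by apply/eqP; rewrite -submx0 -dxHv capmxS.
- move=> s sS; apply/negP=> /sub_addsmxP[u es].
  have : s *m Pj = u.1 *m W'.
    rewrite es mulmxDl -!mulmxA /Pj (proj_mx_id dxHv WH) (proj_mx_0 dxHv) //.
    by rewrite mulmx0 addr0.
  move=> e; move: (av (s *m Pj)); rewrite e submxMl.
  by rewrite -e; move/(_ (imset_f _ sS)).
Qed.

End Lift.


Lemma avoid k : forall V S, cone S -> (forall s, s \in S -> (s <= V)%MS) ->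
  (#|S|.+2 * q ^ k <= q ^ (\rank V).+1)%N ->
  exists W, [/\ (W <= V)%MS, \rank W = k & forall s, s \in S -> ~~ (s <= W)%MS].
Proof.
have q0 : (0 < q)%N by apply: ltnW; apply: q_gt1.
elim: k => [|k IH] V S cS SV hc.
  exists 0; split; rewrite ?sub0mx ?mxrank0 //.
  by move=> s sS; rewrite submx0; apply: contraTneq sS => ->; case: cS.
have h1 : (#|S|.+2 <= q ^ \rank V)%N.
  rewrite -(leq_pmul2r q0) -expnSr; apply: leq_trans hc.
  by rewrite leq_pmul2l // expnS leq_pmulr // expn_gt0 q0.
have [v [vV v0 vS]] := exists_fresh h1.
have [|W [WH rW aW]] := IH (Hs V v) (Sp V S v) (cone_Sp cS SV vS) (@SpH V S v).
  rewrite rankH // -(leq_pmul2r q0) -mulnA -expnSr.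
  rewrite -expnSr; apply: leq_trans hc; by rewrite leq_mul2r !ltnS (card_Sp V S v) orbT.
have [h1' h2 h3] := lift vV v0 WH rW aW.
by exists (W + <<v>>)%MS.
Qed.


Section Col.
Variable c : 'M[F]_n -> bool.

Lemma genZ (a : F) (x : 'rV[F]_n) : a != 0 -> <<a *: x>>%MS = <<x>>%MS.
Proof. by move=> a0; apply: eq_genmx; apply: eqmx_scale. Qed.

Lemma mono_of (W : 'M[F]_n) k col : \rank W = k ->
  (forall v : 'rV_n, v != 0 -> (v <= W)%MS -> c <<v>>%MS = col) ->
  mono_subspace c col k.
Proof.
move=> <- h; exists (row_base W); split; first exact: row_base_free.
by move=> v v0 vU; apply: h; rewrite // -(eq_row_base W).
Qed.

Lemma mono_sub (W : 'M[F]_n) k col : (k <= \rank W)%N ->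
  (forall v : 'rV_n, v != 0 -> (v <= W)%MS -> c <<v>>%MS = col) ->
  mono_subspace c col k.
Proof.
move=> kW h.
have h1 : cone (set0 : {set 'rV[F]_n}) by split=> [|s a]; rewrite inE.
have h2 : forall s : 'rV[F]_n, s \in set0 -> (s <= W)%MS by move=> s; rewrite inE.
have h3 : (#|(set0 : {set 'rV[F]_n})|.+2 * q ^ k <= q ^ (\rank W).+1)%N.
  rewrite cards0 expnS; apply: leq_mul; first exact: q_gt1.
  by rewrite leq_pexp2l // ltnW // q_gt1.
have [W' [W'W rW' _]] := avoid h1 h2 h3.
apply: (mono_of rW') => v v0 vW; apply: h => //; apply: (submx_trans vW); exact: W'W.
Qed.

Lemma plane (s s' : 'rV[F]_n) : s' != 0 -> c <<s'>>%MS -> ~~ (s <= s')%MS ->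
  (forall mu : F, c <<s + mu *: s'>>%MS) -> mono_subspace c true 2.
Proof.
move=> s'0 cs' ns h.
have s0 : s != 0 by apply: contraNneq ns => ->; rewrite sub0mx.
have d : (s :&: s')%MS = 0.
  apply/eqP/rowV0P => x; rewrite sub_capmx => /andP[/sub_rVP[a ->] /sub_rVP[b e]].
  have [->|a0] := eqVneq a 0; first by rewrite scale0r.
  exfalso; move/negP: ns; apply.
  apply/sub_rVP; exists (a^-1 * b); by rewrite -scalerA -e scalerA mulVf // scale1r.
apply: (@mono_of (s + s')%MS) => [|v v0 /sub_addsmxP[[u1 u2] /= ev]].
  by rewrite mxrank_disjoint_sum // !rank_rV s0 s'0.
rewrite (mx11_scalar u1) (mx11_scalar u2) !mul_scalar_mx in ev.
have [a0|a0] := eqVneq (u1 0 0) 0.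
  rewrite ev a0 scale0r add0r genZ //; apply: contraNneq v0 => b0.
  by rewrite ev a0 b0 !scale0r addr0.
have := h ((u1 0 0)^-1 * u2 0 0).
by rewrite -(genZ _ a0) scalerDr scalerA mulrA divff // mul1r -ev => ->.
Qed.

End Col.


Lemma omega_ex (A : {set 'rV[F]_n}) k : (0 < k)%N -> (k <= omega_dir A)%N ->
  exists2 j : nat, (k <= j)%N & has_dir_subspace A j.
Proof.
move=> k0 hk.
case: (boolP [exists j : 'I_n.+1, has_dir_subspace A j && (k <= j)%N]).
  by case/existsP=> j /andP[hj kj]; exists j.
rewrite negb_exists => /forallP hall; exfalso.
have : (omega_dir A <= k.-1)%N.
  apply/bigmax_leqP => j hj; move: (hall j); rewrite hj /= -ltnNge.
  lia.
lia.
Qed.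

Lemma omega_le (A : {set 'rV[F]_n}) : (omega_dir A <= n)%N.
Proof. by apply/bigmax_leqP => j _; rewrite -ltnS. Qed.

Lemma t_lt_n t : m_prop F t n -> (2 <= t)%N -> (t < n)%N.
Proof.
move=> hm ht.
have tn : (t <= n)%N.
  apply: leq_trans (omega_le setT); apply: hm.
  rewrite cardsT card_mx mul1n leq_pexp2l ?(ltnW q_gt1) //.
  lia.
rewrite ltn_neqAle tn andbT; apply/eqP => etn.
have n0 : (0 < n)%N by rewrite -etn; apply: leq_trans ht.
pose e : 'rV[F]_n := const_mx 1.
have e0 : e != 0.
  apply/eqP => h; have := congr1 (fun M : 'rV[F]_n => M 0 (Ordinal n0)) h.
  by rewrite !mxE => /eqP; rewrite oner_eq0.
pose A := [set a *: e | a : F].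
have cA : #|A| = q.
  rewrite card_imset ?card_ord //.
  move=> a b /eqP; rewrite -subr_eq0 -scalerBl scaler_eq0 (negbTE e0) orbF subr_eq0.
  by move/eqP.
have hA : (q ^ (n.+1 - t) <= #|A|)%N.
  by rewrite cA -etn subSn // subnn expn1.
have t0 : (0 < t)%N by lia.
have [j tj hj] := omega_ex t0 (hm A hA).
case/existsP: hj => U /andP[Uf /forallP hU].
have Ue : (U <= e)%MS.
  apply/row_subP => i; move: (hU (row i U)); rewrite row_sub /= => /orP[]; last first.
    by move/eqP->; rewrite sub0mx.
  rewrite inE => /existsP[x /forallP hx].
  have := hx 0; have := hx 1; rewrite scale0r addr0 scale1r.
  move=> /imsetP[b _ eb] /imsetP[a _ ea].
  rewrite (_ : row i U = (b - a) *: e) ?scalemx_sub //.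
  by rewrite scalerBl -eb -ea addrAC subrr add0r.
have := mxrankS Ue; rewrite rank_rV e0 (eqP Uf); lia.
Qed.

End Aux.

Theorem lemma6p2 (F : finFieldType) (t : nat) (ht : (2 <= t)%N) (n : nat) :
  m_prop F t n -> (forall k : nat, (k < n)%N -> ~ m_prop F t k) ->
  exists2 r : nat, (r <= n)%N & ramsey_prop F 2 t r.
Proof.
move=> hm _; exists n => // c.
have tn := t_lt_n hm ht.
have t0 : (0 < t)%N by lia.
have q2 := q_gt1 F.
pose S := [set x : 'rV[F]_n | (x != 0) && c <<x>>%MS].
have cS : cone S.
  split; first by rewrite inE eqxx.
  move=> s a; rewrite !inE => /andP[s0 cs] a0.
  by rewrite scaler_eq0 negb_or a0 s0 genZ.
have blue : forall x, x != 0 -> x \notin S -> c <<x>>%MS = false.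
  by move=> x x0; rewrite inE x0 /= => /negbTE.
have S1 : forall s, s \in S -> (s <= (1%:M : 'M[F]_n))%MS by move=> s _; apply: submx1.
case: (leqP (#|F| ^ (n.+1 - t)) #|S|) => hS.
  have [j tj hj] := omega_ex t0 (hm S hS).
  case/existsP: hj => U /andP[Uf /forallP hU].
  case: (boolP [exists v : 'rV[F]_n, [&& (v <= U)%MS, v != 0 & c <<v>>%MS]]).
    case/existsP => d /and3P[dU d0 cd]; left.
    move: (hU d); rewrite dU /= (negbTE d0) orbF inE => /existsP[x /forallP hx].
    apply: (plane (s:=x) d0 cd).
      apply/negP => /sub_rVP[a ea]; have := hx (-a).
      rewrite ea -scalerDl addrN scale0r => h.
      by case: cS; rewrite h.
    by move=> mu; move: (hx mu); rewrite inE => /andP[_ ->].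
  rewrite negb_exists => /forallP hb; right.
  apply: (@mono_sub F n c <<U>>%MS t false) => [|v v0 vU].
    by rewrite genmxE (eqP Uf).
  rewrite genmxE in vU.
  by move: (hb v); rewrite vU v0 /= => /negbTE.
case: (leqP (#|S|.+2) (#|F| ^ (n.+1 - t))) => hS2.
  right.
  have hc : (#|S|.+2 * #|F| ^ t <= #|F| ^ (\rank (1%:M : 'M[F]_n)).+1)%N.
    rewrite mxrank1; apply: leq_trans (leq_mul hS2 (leqnn _)) _.
    by rewrite -expnD subnK // ltnW // ltnW.
  have [W [_ rW aW]] := avoid cS S1 hc.
  apply: (mono_of rW) => v v0 vW; apply: blue v0 _.
  by apply: contraL vW; apply: aW.
have eS : #|S|.+1 = (#|F| ^ (n.+1 - t))%N by apply/eqP; rewrite eqn_leq hS -ltnS hS2.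
have qS : (#|F| * #|F| <= #|S|.+1)%N.
  rewrite eS mulnn leq_pexp2l; lia.
have [s sS] : exists s, s \in S.
  by apply/card_gt0P; lia.
have [s0 cs] : s != 0 /\ c <<s>>%MS by move: sS; rewrite inE => /andP.
have [s' s'S ns'] : exists2 s', s' \in S & ~~ (s' <= s)%MS.
  case: (boolP [exists s', (s' \in S) && ~~ (s' <= s)%MS]).
    by case/existsP => s' /andP[h1 h2]; exists s'.
  rewrite negb_exists => /forallP hall; exfalso.
  have sub : S \subset ([set a *: s | a : F] :\ 0).
    apply/subsetP => y yS; rewrite !inE.
    move: (hall y); rewrite yS /= negbK => /sub_rVP[a ey].
    move: yS; rewrite inE => /andP[y0 _]; rewrite y0 /=.
    by apply/imsetP; exists a.
  have := subset_leq_card sub.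
  have := cardsD1 0 [set a *: s | a : F].
  rewrite (_ : 0 \in _); last by apply/imsetP; exists 0; rewrite ?scale0r.
  have : (#|[set a *: s | a : F]| <= #|F|)%N by exact: leq_imset_card.
  move=> h1 h2 h3.
  have h4 : (#|S| < #|F|)%N.
    apply: leq_ltn_trans h3 _; rewrite add1n in h2; by rewrite -h2.
  have h5 : (#|F| * 2 <= #|F| * #|F|)%N by rewrite leq_mul2l q2 orbT.
  have := leq_trans (leq_trans h5 qS) h4.
  by rewrite -{2}[#|F|]muln1 leq_mul2l /=; case: #|F| q2.
case: (boolP [forall mu : F, c <<s' + mu *: s>>%MS]).
  by move/forallP => h; left; apply: (plane s0 cs ns').
rewrite negb_forall => /existsP[mu cmu].
pose v := s' + mu *: s.
have v0 : v != 0.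
  apply: contraNneq ns' => h; rewrite (_ : s' = (- mu) *: s) ?scalemx_sub //.
  by apply/eqP; rewrite scaleNr -subr_eq0 opprK; apply/eqP.
have vS : v \notin S by rewrite inE negb_and cmu orbT.
have mu0 : mu != 0.
  by apply: contraNneq vS => m0; rewrite /v m0 scale0r addr0.
have vV : (v <= (1%:M : 'M[F]_n))%MS by apply: submx1.
have cSp : (#|Sp 1%:M S v| < #|S|)%N.
  pose f := fun x : 'rV[F]_n => x *m Pj 1%:M v.
  have fv : f v = 0.
    by rewrite /f /Pj (proj_mx_0 (dxHv _ _)) // genmxE.
  have ms : (- mu) *: s \in S :\ s'.
    rewrite in_setD1 (proj2 cS) ?oppr_eq0 // andbT.
    by apply: contraNneq ns' => <-; rewrite scalemx_sub.
  have sub : Sp 1%:M S v \subset f @: (S :\ s').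
    apply/subsetP => y /imsetP[x xS ->].
    have [xe|xne] := eqVneq x s'; last by apply: imset_f; rewrite in_setD1 xne xS.
    apply/imsetP; exists ((- mu) *: s) => //.
    rewrite xe; apply/eqP; rewrite -subr_eq0 -/(f s') -/(f _) /f -mulmxBl.
    rewrite scaleNr opprK.
    by move: fv; rewrite /f /v => ->.
  have e := cardsD1 s' S; rewrite s'S add1n in e; rewrite e ltnS.
  exact: leq_trans (subset_leq_card sub) (leq_imset_card f _).
have rH := rankH vV v0; rewrite mxrank1 in rH.
have hc : (#|Sp 1%:M S v|.+2 * #|F| ^ t.-1 <= #|F| ^ (\rank (Hs 1%:M v)).+1)%N.
  rewrite rH; apply: leq_trans (leq_mul (_ : #|Sp 1%:M S v|.+2 <= #|F| ^ (n.+1 - t))%N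
     (leqnn _)) _; first by lia.
  by rewrite -expnD; apply: leq_pexp2l; [lia | lia].
have [W' [WH rW aW]] := avoid (cone_Sp cS S1 vS) (@SpH _ _ _ _ _) hc.
have [_ rW2 aW2] := lift vV v0 WH rW aW.
rewrite prednK // in rW2.
right; apply: (mono_of rW2) => x x0 xW; apply: blue x0 _.
by apply: contraL xW; apply: aW2.
Qed.
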